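(* Consider the linear system $\dot y = A^o_{11} y + A^o_{12} z + B^o_1 u$, $\dot z = A^o_{21} y + A^o_{22} z + B^o_2 u$, with output $y=[I_p\ 0][y;z]$, where $y\in\mathbb{R}^p$ are measured states, $z\in\mathbb{R}^{n^o-p}$ are hidden states and $u\in\mathbb{R}^m$ are inputs. Define $W^o(s)=A^o_{11}+A^o_{12}(sI-A^o_{22})^{-1}A^o_{21}$, $V^o(s)=B^o_1+A^o_{12}(sI-A^o_{22})^{-1}B^o_2$, $R^o=\mathrm{diag}\{W^o\}$ (the diagonal matrix formed from the diagonal entries of $W^o$), and the dynamical structure functions $Q=(sI-R^o)^{-1}(W^o-R^o)$, $P=(sI-R^o)^{-1}V^o$. Then \begin{align*} \mathrm{diag}\{A^o_{11}\}&=\lim_{s\to\infty}R^o(s),\\ A^o_{11}-\mathrm{diag}\{A^o_{11}\}&=\lim_{s\to\infty}sQ(s),\\ B^o_1&=\lim_{s\to\infty}sP(s). \end{align*}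
   Context: The dynamical structure functions $[Q,P]$ satisfy $Y=QY+PU$ in the Laplace domain, with $Q$ having zero diagonal; they encode the direct causal relations between measured states and between inputs and measured states. *)

(* Defs.v *)
From HB Require Import structures.
From mathcomp Require Import all_boot all_order all_algebra.
From mathcomp Require Import all_classical all_reals all_analysis.
Set Implicit Arguments. Unset Strict Implicit. Unset Printing Implicit Defensive.
Import Order.TTheory GRing.Theory Num.Theory.
Local Open Scope ring_scope.

(* Dimensions: p measured states, q = n^o - p hidden states, m inputs.
   Transfer functions are evaluated at a real Laplace variable s. *)
Section DSF.
Variables (R : realType) (p q m : nat).
Variables (A11 : 'M[R]_p) (A12 : 'M[R]_(p, q)) (A21 : 'M[R]_(q, p))
          (A22 : 'M[R]_q) (B1 : 'M[R]_(p, m)) (B2 : 'M[R]_(q, m)).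

Definition diagpart n (M : 'M[R]_n) : 'M[R]_n := diag_mx (\row_i M i i).

Definition Wo (s : R) : 'M[R]_p :=
  A11 + A12 *m invmx (s%:M - A22) *m A21.
Definition Vo (s : R) : 'M[R]_(p, m) :=
  B1 + A12 *m invmx (s%:M - A22) *m B2.
Definition Ro (s : R) : 'M[R]_p := diagpart (Wo s).
Definition DSF_Q (s : R) : 'M[R]_p := invmx (s%:M - Ro s) *m (Wo s - Ro s).
Definition DSF_P (s : R) : 'M[R]_(p, m) := invmx (s%:M - Ro s) *m Vo s.
End DSF.

(* Main.v *)
Require Import Defs.
From HB Require Import structures.
From mathcomp Require Import all_boot all_order all_algebra.
From mathcomp Require Import all_classical all_reals all_analysis.
Import Order.TTheory GRing.Theory Num.Theory numFieldNormedType.Exports.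
Local Open Scope classical_set_scope.
Local Open Scope ring_scope.
Set Implicit Arguments. Unset Strict Implicit.

Definition cA (R : realFieldType) n (A : 'M[R]_n) := \sum_k \sum_j `|A k j|.

Lemma cA_ge (R : realFieldType) n (A : 'M[R]_n) k : \sum_j `|A k j| <= cA A.
Proof.
rewrite /cA [X in _ <= X](bigD1 k) //= lerDl; apply: sumr_ge0 => i _; apply: sumr_ge0 => j _.
exact: normr_ge0.
Qed.

Lemma rowbound (R : realFieldType) n (A : 'M[R]_n) (v : 'rV[R]_n) (s : R) :
  0 <= s -> s * \sum_j `|v 0 j| <=
   \sum_j `|(v *m (s%:M - A)) 0 j| + cA A * \sum_j `|v 0 j|.
Proof.
move=> s0.
have E j : s * `|v 0 j| <= `|(v *m (s%:M - A)) 0 j| + \sum_k `|v 0 k| * `|A k j|.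
  have -> : s * `|v 0 j| = `|(v *m (s%:M - A)) 0 j + (v *m A) 0 j|.
    rewrite mulmxBr mul_mx_scalar !mxE subrK normrM ger0_norm //.
  apply: (le_trans (ler_normD _ _)); rewrite lerD2l mxE.
  apply: (le_trans (ler_norm_sum _ _ _)); apply: ler_sum => k _.
  by rewrite normrM.
rewrite mulr_sumr (le_trans (ler_sum _ (fun j _ => E j))) // big_split /= lerD2l.
rewrite exchange_big /= mulr_sumr; apply: ler_sum => k _.
by rewrite -mulr_sumr mulrC ler_wpM2r // cA_ge.
Qed.

Lemma sum_abs_eq0 (R : realFieldType) n (v : 'rV[R]_n) :
  \sum_j `|v 0 j| = 0 -> v = 0.
Proof.
move=> /eqP; rewrite psumr_eq0 => [/allP H|j _]; last exact: normr_ge0.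
apply/rowP => j; rewrite !mxE; apply/eqP; rewrite -normr_eq0.
by apply: (H j); rewrite mem_index_enum.
Qed.

Lemma unit_large (R : realFieldType) n (A : 'M[R]_n) (s : R) :
  cA A < s -> (s%:M - A) \in unitmx.
Proof.
move=> cs; have s0 : 0 <= s.
  apply: le_trans (ltW cs); apply: sumr_ge0 => i _; apply: sumr_ge0 => j _.
  exact: normr_ge0.
rewrite unitmxE unitfE; apply/negP => /det0P [v v0 vM].
have := rowbound A v s0; rewrite vM.
have -> : \sum_j `|(0 : 'rV[R]_n) 0 j| = 0 by apply: big1 => j _; rewrite mxE normr0.
rewrite add0r.
have Sp : 0 < \sum_j `|v 0 j|.
  rewrite lt_def sumr_ge0 ?andbT => [|j _]; last exact: normr_ge0.
  by apply/eqP => /sum_abs_eq0 /eqP; rewrite (negbTE v0).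
by rewrite ler_pM2r // leNgt cs.
Qed.

Lemma inv_bound (R : realFieldType) n (A : 'M[R]_n) (s : R) i j :
  cA A < s -> `|invmx (s%:M - A) i j| <= (s - cA A)^-1.
Proof.
move=> cs; have s0 : 0 <= s.
  apply: le_trans (ltW cs); apply: sumr_ge0 => i' _; apply: sumr_ge0 => j' _.
  exact: normr_ge0.
have := rowbound A (row i (invmx (s%:M - A))) s0.
rewrite -row_mul mulVmx ?unit_large //.
have -> : \sum_j0 `|row i (1%:M : 'M[R]_n) 0 j0| = 1.
  rewrite (bigD1 i) //= big1 => [|k ki]; first by rewrite !mxE eqxx normr1 addr0.
  by rewrite !mxE eq_sym (negbTE ki) normr0.
move=> H0.
have H : (s - cA A) * \sum_j0 `|row i (invmx (s%:M - A)) 0 j0| <= 1.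
  by rewrite mulrBl lerBlDr.
have Hc : 0 < s - cA A by rewrite subr_gt0.
apply: (@le_trans _ _ (\sum_j0 `|row i (invmx (s%:M - A)) 0 j0|)).
  rewrite (bigD1 j) //= mxE lerDl; apply: sumr_ge0 => k _; exact: normr_ge0.
by rewrite -[_^-1]mulr1 ler_pdivlMl.
Qed.

Lemma sub_cvgy (R : realType) (c : R) : s - c @[s --> +oo] --> +oo.
Proof.
apply/cvgryPge => M; near=> s; rewrite lerBrDr; near: s.
by apply: nbhs_pinfty_ge; rewrite num_real.
Unshelve. all: by end_near. Qed.

Lemma invsub_cvg0 (R : realType) (c : R) : (s - c)^-1 @[s --> +oo] --> 0.
Proof.
apply/(@gtr0_cvgV0 _ _ _ _ (fun s => s - c)); last exact: sub_cvgy.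
near=> s; rewrite subr_gt0; near: s.
by apply: nbhs_pinfty_gt; rewrite num_real.
Unshelve. all: by end_near. Qed.

Lemma inv_cvg0 (R : realType) n (A : 'M[R]_n) k l :
  invmx (s%:M - A) k l @[s --> +oo] --> 0.
Proof.
apply: (@squeeze_cvgr _ _ _ _ (fun s => - (s - cA A)^-1) (fun s => (s - cA A)^-1)).
- near=> s; rewrite -ler_norml; apply: inv_bound; near: s.
  by apply: nbhs_pinfty_gt; rewrite num_real.
- rewrite -oppr0; apply: cvgN; exact: invsub_cvg0.
- exact: invsub_cvg0.
Unshelve. all: by end_near. Qed.


Lemma sum_cvg (R : realType) (I : finType) (f : I -> R -> R) (a : I -> R) :
  (forall k, f k s @[s --> +oo] --> a k) ->
  \sum_k f k s @[s --> +oo] --> \sum_k a k.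
Proof. by move=> h; apply: (cvg_big (@add_continuous R)) => // k _; exact: h. Qed.

Lemma prod_cvg0 (R : realType) a n b (L : 'M[R]_(a, n)) (A : 'M[R]_n)
   (Rm : 'M[R]_(n, b)) i j :
  (L *m invmx (s%:M - A) *m Rm) i j @[s --> +oo] --> 0.
Proof.
have H1 l : (L *m invmx (s%:M - A)) i l @[s --> +oo] --> 0.
  have e : \sum_k L i k * 0 = 0 by rewrite big1 // => k _; rewrite mulr0.
  rewrite -[X in _ --> X]e.
  under eq_cvg do rewrite mxE.
  apply: sum_cvg => k; apply: cvgMl_tmp; exact: inv_cvg0.
have e : \sum_l 0 * Rm l j = 0 by rewrite big1 // => k _; rewrite mul0r.
rewrite -[X in _ --> X]e.
under eq_cvg do rewrite mxE.
apply: sum_cvg => l; apply: cvgMr_tmp; exact: H1.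
Qed.

Lemma inv_diag (R : fieldType) n (d : 'rV[R]_n) :
  (forall k, d 0 k != 0) -> invmx (diag_mx d) = diag_mx (\row_k (d 0 k)^-1).
Proof.
move=> h.
have e : diag_mx (\row_k (d 0 k)^-1) *m diag_mx d = 1%:M.
  rewrite mulmx_diag; apply/matrixP => i j; rewrite !mxE mulVf //.
have [_ Du] := mulmx1_unit e.
by rewrite -[LHS]mul1mx -e -mulmxA mulmxV // mulmx1.
Qed.

Lemma sub_w_cvgy (R : realType) (w : R -> R) (a : R) :
  w s @[s --> +oo] --> a -> (s : R) - w s @[s --> +oo] --> +oo.
Proof.
move=> wa; apply/cvgryPge => M.
have h1 : \forall s \near +oo, w s < a + 1 by apply: (cvgr_lt a wa); rewrite ltrDl.
near=> s; have := near h1 s; move=> /(_ _) h.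
rewrite lerBrDr; apply: (@le_trans _ _ (M + (a + 1))).
  by rewrite lerD2l ltW // h.
near: s; by apply: nbhs_pinfty_ge; rewrite num_real.
Unshelve. all: by end_near. Qed.

Lemma sub_w_pos (R : realType) (w : R -> R) (a : R) :
  w s @[s --> +oo] --> a -> \forall s \near +oo, 0 < s - w s.
Proof.
move=> /sub_w_cvgy /cvgryPgt => h; exact: h.
Qed.

Lemma ratio_cvg (R : realType) (w : R -> R) (a : R) :
  w s @[s --> +oo] --> a -> (s : R) * (s - w s)^-1 @[s --> +oo] --> (1 : R).
Proof.
move=> wa.
have i0 : (s - w s)^-1 @[s --> +oo] --> 0.
  apply/(@gtr0_cvgV0 _ _ _ _ (fun s => s - w s)); last exact: sub_w_cvgy wa.
  exact: sub_w_pos wa.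
apply: (cvg_trans (near_eq_cvg (f := fun s => 1 + w s * (s - w s)^-1) _)).
  near=> s; have : 0 < s - w s by near: s; exact: sub_w_pos wa.
  move=> hp /=.
  by rewrite -[1](@mulfV _ (s - w s)) ?gt_eqF // -mulrDl subrK.
have L : 1 + w s * (s - w s)^-1 @[s --> +oo] --> 1 + a * 0.
  by apply: cvgD; [exact: cvg_cst | exact: cvgM wa i0].
by rewrite mulr0 addr0 in L.
Unshelve. all: by end_near. Qed.

Unset Implicit Arguments. Set Strict Implicit.

Theorem proposition1 (R : realType) (p q m : nat)
  (A11 : 'M[R]_p) (A12 : 'M[R]_(p, q)) (A21 : 'M[R]_(q, p))
  (A22 : 'M[R]_q) (B1 : 'M[R]_(p, m)) (B2 : 'M[R]_(q, m)) :
  [/\ (forall i j : 'I_p,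
         Ro A11 A12 A21 A22 s i j @[s --> +oo] --> diagpart A11 i j),
      (forall i j : 'I_p,
         (s *: DSF_Q A11 A12 A21 A22 s) i j @[s --> +oo]
           --> (A11 - diagpart A11) i j) &
      (forall (i : 'I_p) (j : 'I_m),
         (s *: DSF_P A11 A12 A21 A22 B1 B2 s) i j @[s --> +oo]
           --> B1 i j)].
Proof.
have Wc i j : Wo A11 A12 A21 A22 s i j @[s --> +oo] --> A11 i j.
  have L : A11 i j + (A12 *m invmx (s%:M - A22) *m A21) i j @[s --> +oo]
     --> A11 i j + 0 by apply: cvgD; [exact: cvg_cst | exact: prod_cvg0].
  rewrite addr0 in L; apply: (cvg_trans _ L); apply: near_eq_cvg.
  by apply: nearW => s /=; rewrite /Wo [in RHS]mxE.
have Vc i j : Vo A12 A22 B1 B2 s i j @[s --> +oo] --> B1 i j.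
  have L : B1 i j + (A12 *m invmx (s%:M - A22) *m B2) i j @[s --> +oo]
     --> B1 i j + 0 by apply: cvgD; [exact: cvg_cst | exact: prod_cvg0].
  rewrite addr0 in L; apply: (cvg_trans _ L); apply: near_eq_cvg.
  by apply: nearW => s /=; rewrite /Vo [in RHS]mxE.
have P1 i j : Ro A11 A12 A21 A22 s i j @[s --> +oo] --> diagpart A11 i j.
  have -> : diagpart A11 i j = A11 i i *+ (i == j) by rewrite /diagpart !mxE.
  have L : Wo A11 A12 A21 A22 s i i *+ (i == j) @[s --> +oo] --> A11 i i *+ (i == j).
    case: (eqVneq i j) => [_|nij].
      exact: Wc.
    exact: cvg_cst.
  apply: (cvg_trans _ L); apply: near_eq_cvg; apply: nearW => s /=.
  by rewrite /Ro /diagpart !mxE.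
have hpos : \forall s \near +oo, forall k,
    0 < s - Wo A11 A12 A21 A22 s k k.
  by apply: filter_forall => k; exact: sub_w_pos (Wc k k).
have key n (N : 'M[R]_(p, n)) (s : R) i j :
    (forall k, 0 < s - Wo A11 A12 A21 A22 s k k) ->
    (s *: (invmx (s%:M - Ro A11 A12 A21 A22 s) *m N)) i j
      = s * (s - Wo A11 A12 A21 A22 s i i)^-1 * N i j.
  move=> hk.
  have -> : s%:M - Ro A11 A12 A21 A22 s =
      diag_mx (\row_k (s - Wo A11 A12 A21 A22 s k k)).
    by apply/matrixP => a b; rewrite /Ro /diagpart !mxE mulrnBl.
  rewrite inv_diag => [|k]; last by rewrite mxE gt_eqF.
  by rewrite mul_diag_mx !mxE mulrA.
split => // i j.
- have -> : (A11 - diagpart A11) i j = A11 i j - diagpart A11 i j by rewrite [LHS]mxE [X in _ + X]mxE.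
  apply: (cvg_trans (near_eq_cvg (f := fun s => s * (s - Wo A11 A12 A21 A22 s i i)^-1
     * (Wo A11 A12 A21 A22 s - Ro A11 A12 A21 A22 s) i j) _)).
    near=> s; rewrite /DSF_Q key //; near: s; exact: hpos.
  have L2 : (Wo A11 A12 A21 A22 s - Ro A11 A12 A21 A22 s) i j @[s --> +oo]
      --> A11 i j - diagpart A11 i j.
    apply: (cvg_trans _ (cvgD (Wc i j) (cvgN (P1 i j)))); apply: near_eq_cvg.
    by apply: nearW => s /=; rewrite [RHS]mxE; congr (_ + _); rewrite [RHS]mxE.
  have L := cvgM (ratio_cvg (Wc i i)) L2.
  rewrite mul1r in L; exact: L.
- apply: (cvg_trans (near_eq_cvg (f := fun s => s * (s - Wo A11 A12 A21 A22 s i i)^-1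
     * Vo A12 A22 B1 B2 s i j) _)).
    near=> s; rewrite /DSF_P key //; near: s; exact: hpos.
  have L := cvgM (ratio_cvg (Wc i i)) (Vc i j).
  rewrite mul1r in L; exact: L.
Unshelve. all: by end_near. Qed.
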